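(* Let $\hat P=\mathrm{Spec}(B)$ be an affine extension of a principal $\mathbb{G}_a$-bundle $P\to S_*$ with $\hat P\not\simeq S\times\mathbb{G}_a$. If $\mathrm{gr}_D(B)$ is generated as an $\mathcal O(S)$-algebra by its elements of degree $1$, then the exceptional fiber $E=\hat\pi^{-1}(\mathbf x)$ consists of $\mathbb{G}_a$-fixed points only.
   Context: All varieties are over $\mathbb{C}$. $S$ normal affine surface, $\mathbf{x}\in S$ a closed regular point, $S_*=S\setminus\{\mathbf{x}\}$. An affine extension of $\pi\colon P\to S_*$ is a normal affine $\mathbb{G}_a$-variety $\hat P=\mathrm{Spec}(B)$ with a morphism $\hat\pi\colon\hat P\to S$ and a $\mathbb{G}_a$-equivariant dominant open embedding $\iota\colon P\hookrightarrow\hat P$ with $\iota(P)=\hat\pi^{-1}(S_* )$ and $\hat\pi\circ\iota=\pi$. $D$ is the locally nilpotent derivation of $B$ corresponding to the $\mathbb{G}_a$-action, $\ker D=\mathcal O(S)$, and $\mathrm{gr}_D(B)=\bigoplus_{\nu\ge0}\ker D^{\nu+1}/\ker D^{\nu}$. *)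

(* Defs.v *)
From HB Require Import structures.
From mathcomp Require Import all_boot all_order all_algebra.
From mathcomp Require Import complex Rstruct.
Set Implicit Arguments. Unset Strict Implicit. Unset Printing Implicit Defensive.
Import Order.TTheory GRing.Theory Num.Theory.
Local Open Scope ring_scope.

Definition CC : closedFieldType := (Rdefinitions.R)[i].

Section Defs.

Variable R : comNzRingType.

Definition is_domain : Prop := forall x y : R, x * y = 0 -> x = 0 \/ y = 0.

(* integrally closed in its field of fractions: if x/y is integral over R,
   i.e. (x/y)^n + sum_{i<n} c_i (x/y)^i = 0, then x/y lies in R *)
Definition is_normal_domain : Prop :=
  is_domain /\
  forall x y : R, y != 0 ->
    (exists (n : nat) (c : 'I_n -> R),
        x ^+ n + \sum_(i < n) c i * x ^+ i * y ^+ (n - i) = 0) ->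
    exists z : R, x = z * y.

Definition is_ideal (P : R -> Prop) : Prop :=
  [/\ P 0, (forall x y, P x -> P y -> P (x + y)) &
      (forall a x, P x -> P (a * x))].

Definition prime_ideal (P : R -> Prop) : Prop :=
  [/\ is_ideal P, ~ P 1 & forall x y, P (x * y) -> P x \/ P y].

Definition strict_incl (P Q : R -> Prop) : Prop :=
  (forall x, P x -> Q x) /\ exists x, Q x /\ ~ P x.

Definition prime_chain_to (Q : R -> Prop) (n : nat) : Prop :=
  exists c : nat -> (R -> Prop),
    [/\ (forall i, (i <= n)%N -> prime_ideal (c i)),
        (forall i, (i < n)%N -> strict_incl (c i) (c i.+1)) &
        (forall x, c n x <-> Q x)].

Definition prime_chain (n : nat) : Prop :=
  exists c : nat -> (R -> Prop),
    (forall i, (i <= n)%N -> prime_ideal (c i)) /\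
    (forall i, (i < n)%N -> strict_incl (c i) (c i.+1)).

Definition krull_dim_eq (d : nat) : Prop := prime_chain d /\ ~ prime_chain d.+1.

Definition height_eq (Q : R -> Prop) (h : nat) : Prop :=
  prime_chain_to Q h /\ ~ prime_chain_to Q h.+1.

End Defs.

Section AlgDefs.

Variable A : comAlgType CC.

Definition fin_gen_alg : Prop :=
  exists (n : nat) (g : 'I_n -> A),
    forall P : A -> Prop,
      P 1 -> (forall x y, P x -> P y -> P (x + y)) ->
      (forall x y, P x -> P y -> P (x * y)) ->
      (forall (c : CC) x, P x -> P (c *: x)) ->
      (forall i, P (g i)) -> forall a, P a.

Definition normal_affine_algebra : Prop := fin_gen_alg /\ is_normal_domain A.

Definition normal_affine_surface_algebra : Prop :=
  normal_affine_algebra /\ krull_dim_eq A 2.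

(* closed points = CC-algebra homomorphisms A -> CC *)
Definition is_point (f : A -> CC) : Prop :=
  [/\ f 1 = 1, (forall x y, f (x + y) = f x + f y),
      (forall x y, f (x * y) = f x * f y) &
      (forall (c : CC) x, f (c *: x) = c * f x)].

Definition point_ideal (f : A -> CC) : A -> Prop := fun a => f a = 0.

(* the local ring A_m at m = point_ideal f is regular: its maximal ideal
   m A_m is generated by h = dim A_m = height m elements *)
Definition regular_point (f : A -> CC) : Prop :=
  exists h : nat, height_eq (point_ideal f) h /\
    exists u : 'I_h -> A, (forall i, f (u i) = 0) /\
      forall a, f a = 0 ->
        exists (s : A) (c : 'I_h -> A), f s != 0 /\ s * a = \sum_(i < h) c i * u i.

Definition is_alg_hom (B : comAlgType CC) (phi : A -> B) : Prop :=
  [/\ phi 1 = 1, (forall x y, phi (x + y) = phi x + phi y),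
      (forall x y, phi (x * y) = phi x * phi y) &
      (forall (c : CC) x, phi (c *: x) = c *: phi x)].

End AlgDefs.

Section LND.

Variable B : comAlgType CC.
Variable D : B -> B.

Definition is_LND : Prop :=
  [/\ (forall x y, D (x + y) = D x + D y),
      (forall (c : CC) x, D (c *: x) = c *: D x),
      (forall x y, D (x * y) = x * D y + D x * y) &
      (forall x, exists n, iter n D x = 0)].

(* exp(tD) b, computed as a finite sum when D^N b = 0 *)
Definition expD (t : CC) (b : B) (N : nat) : B :=
  \sum_(k < N) (t ^+ k / (k`!)%:R) *: iter k D b.

(* the closed point phi : B -> CC of Spec B is fixed by the G_a-action
   t . phi = phi o exp(tD) *)
Definition Ga_fixed_point (phi : B -> CC) : Prop :=
  forall (t : CC) (b : B) (N : nat), iter N D b = 0 -> phi (expD t b N) = phi b.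

(* gr_D(B) = (+)_nu ker D^{nu+1}/ker D^nu is generated, as an
   algebra over its degree-0 part ker D = O(S) (identified with A via iota),
   by its elements of degree 1: every class of degree nu is an
   A-linear combination of products of nu elements of degree 1. *)
Definition grD_generated_in_degree1 (A : comAlgType CC) (iota : A -> B) : Prop :=
  forall (nu : nat) (b : B), iter nu.+1 D b = 0 ->
    exists (n : nat) (a : 'I_n -> A) (y : 'I_n -> 'I_nu -> B),
      (forall i j, iter 2 D (y i j) = 0) /\
      iter nu D (b - \sum_(i < n) iota (a i) * \prod_(j < nu) y i j) = 0.

End LND.

(* Main.v *)
Require Import Defs.
From HB Require Import structures.
From mathcomp Require Import all_boot all_order all_algebra.
From mathcomp Require Import complex Rstruct.
From mathcomp Require Import ring.
From mathcomp Require Import boolp classical_sets functions cardinality.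
From Stdlib Require Import Runcountable.
Set Implicit Arguments. Unset Strict Implicit. Unset Printing Implicit Defensive.
Import GRing.Theory Num.Theory.
Local Open Scope ring_scope.

Section Uncountable.
Local Open Scope classical_set_scope.
Local Open Scope card_scope.
HB.instance Definition _ := @isPointed.Build Rdefinitions.R 0%R.



Lemma R_not_countable : ~ countable [set: Rdefinitions.R].
Proof.
move=> cR.
have le1 : [set: nat] #<= [set: Rdefinitions.R].
  apply/pcard_injP; exists (fun n : nat => (n%:R : Rdefinitions.R)).
  by move=> m n _ _ /eqP; rewrite eqr_nat => /eqP.
have /card_bijP[f [g fg gf]] := Cantor_Bernstein le1 cR.
have mN (n : nat) : [set: nat] n by [].
have mR (x : Rdefinitions.R) : [set: Rdefinitions.R] x by [].
apply: (R_uncountable (fun n => val (f (SigSub (mem_set (mN n)))))).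
exists (fun x => val (g (SigSub (mem_set (mR x))))); split.
- move=> n /=; set z := f _.
  have -> : SigSub (mem_set (mR (val z))) = z by apply: val_inj.
  by rewrite fg.
- move=> x /=; set z := g _.
  have -> : SigSub (mem_set (mN (val z))) = z by apply: val_inj.
  by rewrite gf.
Qed.

Lemma R_pigeon (f : Rdefinitions.R -> nat) :
  exists N (g : nat -> Rdefinitions.R), injective g /\ forall k, (f (g k) <= N)%N.
Proof.
apply: contrapT => H.
have fin N : finite_set [set c : Rdefinitions.R | (f c <= N)%N].
  apply: contrapT => /infiniteP /pcard_leP [F].
  apply: H; exists N, (fun n : nat => (F n : Rdefinitions.R)); split.
    by move=> x y e; exact: (@inj _ _ _ F x y (mem_set I) (mem_set I) e).
  by move=> k; exact: (@funS _ _ _ _ F k I).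
apply: R_not_countable.
have -> : [set: Rdefinitions.R] = \bigcup_(N in [set: nat]) [set c | (f c <= N)%N].
  by apply/seteqP; split => [c _|//]; exists (f c) => //=.
apply: bigcup_countable; first exact: countableP.
by move=> N _; apply: finite_set_countable.
Qed.

End Uncountable.

Lemma lin_dep (F : fieldType) N (v : 'I_N.+1 -> 'I_N -> F) :
  exists lam : 'I_N.+1 -> F, (exists k, lam k != 0) /\
    forall i, \sum_k lam k * v k i = 0.
Proof.
pose M : 'M[F]_(N.+1, N) := \matrix_(k, i) v k i.
have nf : ~~ row_free M.
  rewrite /row_free; apply/negP => /eqP h.
  by have := rank_leq_col M; rewrite h ltnn.
have : kermx M != 0 by rewrite kermx_eq0.
case/matrix0Pn => r [j Hj].
pose w := row r (kermx M).
have wK : w *m M = 0 by apply/sub_kermxP; apply: row_sub.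
exists (fun k => w 0 k); split; first by exists j; rewrite mxE.
move=> i; transitivity ((w *m M) 0 i); last by rewrite wK mxE.
by rewrite mxE; apply: eq_bigr => k _; rewrite /M !mxE.
Qed.

Section Ideals.
Variable A : comAlgType CC.
Implicit Types (K : A -> Prop) (x y a : A).

Lemma idealN K x : is_ideal K -> K x -> K (- x).
Proof. by case=> _ _ hm kx; rewrite -mulN1r; apply: hm. Qed.

Lemma idealB K x y : is_ideal K -> K x -> K y -> K (x - y).
Proof. move=> hK kx ky; case: (hK) => _ hD _; apply: hD => //; exact: idealN. Qed.

Lemma idealM K x y : is_ideal K -> K x -> K (y * x).
Proof. by case=> _ _ hm kx; apply: hm. Qed.

Lemma idealMr K x y : is_ideal K -> K x -> K (x * y).
Proof. by move=> hK kx; rewrite mulrC; apply: idealM. Qed.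

Lemma idealZ K (c : CC) x : is_ideal K -> K x -> K (c *: x).
Proof. by move=> hK kx; rewrite -mulr_algl; apply: idealM. Qed.

Lemma idealD K x y : is_ideal K -> K x -> K y -> K (x + y).
Proof. by case=> _ hD _; apply: hD. Qed.

Lemma ideal0 K : is_ideal K -> K 0.
Proof. by case. Qed.

Lemma idealS K (I : Type) (r : seq I) (F : I -> A) :
  is_ideal K -> (forall i, K (F i)) -> K (\sum_(i <- r) F i).
Proof.
move=> hK hF; elim: r => [|i r IH]; first by rewrite big_nil; exact: ideal0.
by rewrite big_cons; apply: idealD.
Qed.

Definition ext K (u : A) : A -> Prop := fun x => exists k r, K k /\ x = k + r * u.

Lemma ext_ideal K u : is_ideal K -> is_ideal (ext K u).
Proof.
move=> hK; split.
- by exists 0, 0; split; [exact: ideal0 | rewrite mul0r addr0].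
- move=> x y [k1 [r1 [k1K ->]]] [k2 [r2 [k2K ->]]].
  exists (k1 + k2), (r1 + r2); split; first exact: idealD.
  by rewrite mulrDl addrACA.
- move=> a x [k [r [kK ->]]]; exists (a * k), (a * r); split; first exact: idealM.
  by rewrite mulrDr mulrA.
Qed.

Lemma ext_sub K u x : is_ideal K -> K x -> ext K u x.
Proof. by move=> hK kx; exists x, 0; rewrite mul0r addr0. Qed.

Lemma ext_u K u : is_ideal K -> ext K u u.
Proof. by move=> hK; exists 0, 1; rewrite mul1r add0r; split => //; exact: ideal0. Qed.

Definition unitK K (u : A) := exists s, K (s * u - 1).

Lemma unitK_mul K u v : is_ideal K -> unitK K u -> unitK K v -> unitK K (u * v).
Proof.
move=> hK [s1 h1] [s2 h2]; exists (s1 * s2).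
have -> : s1 * s2 * (u * v) - 1 = (s1 * u - 1) * (s2 * v) + (s2 * v - 1).
  by ring.
by apply: idealD => //; apply: idealMr.
Qed.

Lemma unitK_prod K (I : Type) (r : seq I) (F : I -> A) :
  is_ideal K -> (forall i, unitK K (F i)) -> unitK K (\prod_(i <- r) F i).
Proof.
move=> hK hF; elim: r => [|i r IH].
  by rewrite big_nil; exists 1; rewrite mul1r subrr; exact: ideal0.
by rewrite big_cons; apply: unitK_mul.
Qed.

Lemma unitK_cancel K u x : is_ideal K -> ~ K 1 -> unitK K u -> K (x * u) -> K x.
Proof.
move=> hK _ [s hs] kxu.
have -> : x = s * (x * u) - x * (s * u - 1).
  by ring.
by apply: idealB => //; [apply: idealM | apply: idealM].
Qed.

Lemma unitK_not0 K u : is_ideal K -> ~ K 1 -> unitK K u -> ~ K u.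
Proof.
move=> hK n1 uu ku; have := @unitK_cancel K u 1 hK n1 uu; rewrite mul1r => h.
exact: n1 (h ku).
Qed.

End Ideals.

Section Poly.
Variable A : comAlgType CC.
Implicit Types (K : A -> Prop).

Lemma ev_XsubC (g : A) (c : CC) : horner_alg g ('X - c%:P) = g - c%:A.
Proof. by rewrite rmorphB /= horner_algX horner_algC. Qed.

Lemma poly_nonroot K (g : A) : is_ideal K -> ~ K 1 ->
  (forall c : CC, unitK K (g - c%:A)) ->
  forall p : {poly CC}, K (horner_alg g p) -> p = 0.
Proof.
move=> hK n1 hu p kp; apply/eqP; apply: contraT => pn0; exfalso.
have [r Hr] := closed_field_poly_normal p.
move: kp; rewrite Hr linearZ /= rmorph_prod /= => kp.
have kq : K (\prod_(z <- r) horner_alg g ('X - z%:P)).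
  have := @idealZ _ _ (lead_coef p)^-1 _ hK kp.
  rewrite mulr_algl scalerA mulVf ?scale1r //.
  by rewrite lead_coef_eq0.
apply: (unitK_not0 hK n1 _ kq); apply: unitK_prod => // z.
by rewrite ev_XsubC.
Qed.

Lemma indep K (g : A) (r : CC -> A) : is_ideal K -> ~ K 1 ->
  (forall c, K (r c * (g - c%:A) - 1)) ->
  forall m (c : 'I_m -> CC) (lam : 'I_m -> CC), injective c ->
  (exists k, lam k != 0) -> ~ K (\sum_k lam k *: r (c k)).
Proof.
move=> hK n1 hr m c lam cinj [k0 lk0] kS.
have hu d : unitK K (g - d%:A) by exists (r d).
pose Q k := \prod_(j | j != k) ('X - (c j)%:P).
pose Pi := \prod_j ('X - (c j)%:P).
pose P := \sum_k lam k *: Q k.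
have ePi k : horner_alg g Pi = (g - (c k)%:A) * horner_alg g (Q k).
  by rewrite /Pi (bigD1 k) //= rmorphM /= ev_XsubC.
have kP : K (horner_alg g P).
  have -> : horner_alg g P = horner_alg g Pi * (\sum_k lam k *: r (c k)) +
     \sum_k lam k *: (- (horner_alg g (Q k) * (r (c k) * (g - (c k)%:A) - 1))).
    rewrite mulr_sumr -big_split /= /P linear_sum /=; apply: eq_bigr => k _.
    rewrite linearZ /= mulr_algl -scalerAr -scalerDr; congr (_ *: _).
    rewrite (ePi k); ring.
  apply: (idealD hK); first exact: idealM.
  by apply: idealS => // k; apply: idealZ => //; apply: idealN => //; apply: idealM.
have P0 := poly_nonroot hK n1 hu kP.
have := congr1 (fun q => q.[c k0]) P0; rewrite horner0 /P horner_sum.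
rewrite (bigD1 k0) //= big1 ?addr0.
  rewrite hornerZ horner_prod => /eqP; rewrite mulf_eq0 (negbTE lk0) /=.
  apply/negP; apply/prodf_neq0 => j jk0; rewrite hornerXsubC subr_eq0.
  by apply/negP => /eqP /cinj ej; rewrite ej eqxx in jk0.
move=> k kk0; rewrite hornerZ horner_prod (bigD1 k0) /=; last by rewrite eq_sym.
by rewrite hornerXsubC subrr mul0r mulr0.
Qed.
End Poly.

Section Span.
Variable A : comAlgType CC.
Implicit Types (K : A -> Prop).

Definition mw n (gen : 'I_n -> A) (w : seq 'I_n) : A := \prod_(i <- w) gen i.

Lemma fg_span : fin_gen_alg A -> exists n (gen : 'I_n -> A),
  forall a : A, exists s : seq (CC * seq 'I_n), a = \sum_(p <- s) p.1 *: mw gen p.2.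
Proof.
case=> n [gen hind]; exists n, gen.
apply: hind.
- by exists [:: (1, [::])]; rewrite big_seq1 /mw big_nil scale1r.
- move=> x y [s1 e1] [s2 e2]; exists (s1 ++ s2); by rewrite e1 e2 big_cat.
- move=> x y [s1 e1] [s2 e2]; rewrite e1 e2.
  exists [seq (p.1 * q.1, p.2 ++ q.2) | p <- s1, q <- s2].
  rewrite big_allpairs_dep /= mulr_suml; apply: eq_bigr => p _.
  rewrite mulr_sumr; apply: eq_bigr => q _.
  by rewrite /mw big_cat /= -scalerAl -scalerAr scalerA.
- move=> c x [s e]; rewrite e; exists [seq (c * p.1, p.2) | p <- s].
  by rewrite big_map scaler_sumr; apply: eq_bigr => p _; rewrite scalerA.
- by move=> i; exists [:: (1, [:: i])]; rewrite big_seq1 /mw big_seq1 scale1r.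
Qed.

Definition Mb n (gen : 'I_n -> A) (i : nat) : A :=
  mw gen (odflt [::] (unpickle i)).

Definition Nb n (s : seq (CC * seq 'I_n)) : nat := \max_(p <- s) (pickle p.2).+1.

Lemma coord n (gen : 'I_n -> A) (s : seq (CC * seq 'I_n)) N : (Nb s <= N)%N ->
  \sum_(p <- s) p.1 *: mw gen p.2 =
  \sum_(i < N) (\sum_(p <- s | pickle p.2 == i) p.1) *: Mb gen i.
Proof.
move=> hN.
under [RHS]eq_bigr => i _ do rewrite scaler_suml big_mkcond /=.
rewrite exchange_big /= big_seq [RHS]big_seq; apply: eq_bigr => p ps.
have hp : (pickle p.2 < N)%N.
  apply: leq_trans hN; rewrite /Nb.
  exact: (@leq_bigmax_seq _ s xpredT (fun p : CC * seq 'I_n => (pickle p.2).+1) p ps).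
rewrite (bigD1 (Ordinal hp)) //= eqxx big1 ?addr0.
  by rewrite /Mb pickleK.
by move=> i ih; case: eqP => // e; move: ih; rewrite -val_eqE /= e eqxx.
Qed.

End Span.

Section Key.
Variable A : comAlgType CC.
Implicit Types (K : A -> Prop).

Lemma key K (g : A) : fin_gen_alg A -> is_ideal K -> ~ K 1 ->
  exists c : CC, ~ ext K (g - c%:A) 1.
Proof.
move=> hA hK n1; apply: contrapT => H.
have hr c : exists r, K (r * (g - c%:A) - 1).
  apply: contrapT => H2; apply: H; exists c => -[k [r [kk e]]]; apply: H2.
  exists r; have -> : r * (g - c%:A) - 1 = - k by rewrite [X in _ - X]e; ring.
  exact: idealN.
have [r hr'] := choice hr.
have [n [gen hsp]] := fg_span hA.
have [s hs] := choice hsp.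
pose f (x : Rdefinitions.R) : nat := Nb (s (r (Complex x 0 : CC))).
have [N [gx [gxi hgx]]] := R_pigeon f.
pose c (k : 'I_N.+1) : CC := Complex (gx k) 0.
have ci : injective c by move=> k1 k2 [] /gxi /val_inj.
pose v (k : 'I_N.+1) (i : 'I_N) : CC := \sum_(p <- s (r (c k)) | pickle p.2 == i) p.1.
have [lam [nz hlam]] := lin_dep v.
apply: (indep hK n1 hr' ci nz).
have -> : \sum_k lam k *: r (c k) = 0.
  transitivity (\sum_k lam k *: \sum_(i < N) v k i *: Mb gen i).
    apply: eq_bigr => k _; congr (_ *: _).
    by rewrite {1}(hs (r (c k))); apply: coord; apply: hgx.
  under eq_bigr => k _ do rewrite scaler_sumr.
  rewrite exchange_big /= big1 // => i _.
  under eq_bigr => k _ do rewrite scalerA.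
  by rewrite -scaler_suml hlam scale0r.
exact: ideal0.
Qed.

Lemma nss J : fin_gen_alg A -> is_ideal J -> ~ J 1 ->
  exists eta : A -> CC, is_point eta /\ forall a, J a -> eta a = 0.
Proof.
move=> hA hJ nJ.
have [n [gen hind]] := hA.
have step k : (k <= n)%N -> exists K, [/\ is_ideal K, ~ K 1, (forall a, J a -> K a) &
    forall i : 'I_n, (i < k)%N -> exists c : CC, K (gen i - c%:A)].
  elim: k => [_|k IH hk].
    by exists J; split => // i.
  have [K [hK nK JK hi]] := IH (ltnW hk).
  have [c hc] := key (gen (Ordinal hk)) hA hK nK.
  exists (ext K (gen (Ordinal hk) - c%:A)); split.
  - exact: ext_ideal.
  - exact: hc.
  - by move=> a /JK; apply: ext_sub.
  - move=> i; rewrite ltnS leq_eqVlt => /orP [/eqP ei|lik].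
      exists c; have -> : i = Ordinal hk by apply: val_inj.
      exact: ext_u.
    by have [d hd] := hi i lik; exists d; apply: ext_sub.
have [K [hK nK JK hi]] := step n (leqnn n).
have uniq a c d : K (a - c%:A) -> K (a - d%:A) -> c = d.
  move=> h1 h2; apply: contrapT => /eqP cd; apply: nK.
  have := idealB hK h2 h1.
  have -> : a - d%:A - (a - c%:A) = (c - d)%:A by rewrite scalerBl; ring.
  move=> h3; have := @idealZ _ _ (c - d)^-1 _ hK h3.
  by rewrite scalerA mulVf ?scale1r // subr_eq0.
have ex : forall a, exists c : CC, K (a - c%:A).
  apply: hind.
  - by exists 1; rewrite scale1r subrr; exact: ideal0.
  - move=> x y [c hc] [d hd]; exists (c + d).
    have -> : x + y - (c + d)%:A = (x - c%:A) + (y - d%:A) by rewrite scalerDl; ring.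
    exact: idealD.
  - move=> x y [c hc] [d hd]; exists (c * d).
    have -> : x * y - (c * d)%:A = (x - c%:A) * y + c%:A * (y - d%:A).
      by rewrite -[(c * d)%:A]scalerA -mulr_algl; ring.
    by apply: idealD => //; [exact: idealMr | exact: idealM].
  - move=> c x [d hd]; exists (c * d).
    have -> : c *: x - (c * d)%:A = c *: (x - d%:A) by rewrite scalerBr scalerA.
    exact: idealZ.
  - by move=> i; apply: hi.
have [eta heta] := choice ex.
exists eta; split; last first.
  move=> a /JK ka; apply: (uniq a); first exact: heta.
  by rewrite scale0r subr0.
split.
- by apply: (uniq 1) => //; rewrite scale1r subrr; exact: ideal0.
- move=> x y; apply: (uniq (x + y)) => //.
  have -> : x + y - (eta x + eta y)%:A = (x - (eta x)%:A) + (y - (eta y)%:A).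
    by rewrite scalerDl; ring.
  exact: idealD.
- move=> x y; apply: (uniq (x * y)) => //.
  have -> : x * y - (eta x * eta y)%:A =
      (x - (eta x)%:A) * y + (eta x)%:A * (y - (eta y)%:A).
    by rewrite -[(eta x * eta y)%:A]scalerA -mulr_algl; ring.
  by apply: idealD => //; [exact: idealMr | exact: idealM].
- move=> c x; apply: (uniq (c *: x)) => //.
  have -> : c *: x - (c * eta x)%:A = c *: (x - (eta x)%:A) by rewrite scalerBr scalerA.
  exact: idealZ.
Qed.
End Key.
Section Slice.
Variables (A B : comAlgType CC) (iota : A -> B) (D : B -> B).
Hypothesis hiota : is_alg_hom iota.
Hypothesis hiota_inj : injective iota.
Hypothesis hD : is_LND D.
Hypothesis hker : forall b : B, D b = 0 <-> exists a : A, b = iota a.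

Definition io : A -> B := iota.
Lemma io0 : io 0 = 0.
Proof. by case: hiota => _ hA _ _; apply: (addrI (io 0)); rewrite /io -hA !addr0. Qed.
Lemma io_nmod : nmod_morphism io.
Proof. by split; [exact: io0 | case: hiota]. Qed.
HB.instance Definition _ := GRing.isNmodMorphism.Build A B io io_nmod.
Lemma io_mon : monoid_morphism io.
Proof. by case: hiota. Qed.
HB.instance Definition _ := GRing.isMonoidMorphism.Build A B io io_mon.


Lemma D0 : D 0 = 0.
Proof. by case: hD => hA _ _ _; apply: (addrI (D 0)); rewrite -hA !addr0. Qed.
Lemma DD x y : D (x + y) = D x + D y. Proof. by case: hD. Qed.
Lemma DM x y : D (x * y) = x * D y + D x * y. Proof. by case: hD. Qed.
Lemma Dio a : D (io a) = 0. Proof. by apply/hker; exists a. Qed.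

Variable s : B.
Hypothesis hs : D s = 1.

Definition Phi (p : {poly A}) : B := (map_poly io p).[s].

Lemma Phi1 : Phi 1 = 1. Proof. by rewrite /Phi rmorph1 hornerC. Qed.
Lemma PhiD p q : Phi (p + q) = Phi p + Phi q. Proof. by rewrite /Phi rmorphD hornerD. Qed.
Lemma PhiM p q : Phi (p * q) = Phi p * Phi q. Proof. by rewrite /Phi rmorphM hornerM. Qed.
Lemma PhiC a : Phi a%:P = iota a. Proof. by rewrite /Phi map_polyC hornerC. Qed.
Lemma Phi0 : Phi 0 = 0. Proof. by rewrite /Phi rmorph0 horner0. Qed.

Lemma Phi_deriv p : Phi (p^`()) = D (Phi p).
Proof.
rewrite /Phi -deriv_map; elim/poly_ind: p => [|p c IH].
  by rewrite rmorph0 deriv0 horner0 D0.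
rewrite rmorphD rmorphM /= map_polyX map_polyC /= derivMXaddC hornerMXaddC.
rewrite hornerD hornerM hornerX DD DM hs -IH Dio.
by rewrite addr0 mulr1.
Qed.

Lemma Phi_inj : injective Phi.
Proof.
suff H p : Phi p = 0 -> p = 0.
  move=> p q e; apply/eqP; rewrite -subr_eq0; apply/eqP; apply: H.
  by rewrite /Phi rmorphB hornerD hornerN -/(Phi p) -/(Phi q) e subrr.
move: {2}(size p) (leqnn (size p)) => n; elim: n p => [|n IH] p hp e.
  by apply/eqP; rewrite -size_poly_eq0 -leqn0.
have hp' : p^`() = 0.
  have [->|pn0] := eqVneq p 0; first by rewrite deriv0.
  apply: IH; last by rewrite Phi_deriv e D0.
  by rewrite -ltnS (leq_trans (lt_size_deriv pn0)).
have hc : p = (p`_0)%:P.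
  apply/polyP => i; rewrite coefC; case: i => [|i] //=.
  have := congr1 (fun q : {poly A} => q`_i) hp'.
  rewrite coef_deriv coef0 -scaler_nat => /eqP.
  rewrite scaler_eq0 pnatr_eq0 /= => /eqP //.
have e' : iota p`_0 = iota 0 by rewrite -PhiC -hc e; have := io0.
by rewrite hc (hiota_inj e').
Qed.


Definition prim (p : {poly A}) : {poly A} :=
  \poly_(i < (size p).+1) (if i is j.+1 then (j.+1%:R : CC)^-1 *: p`_j else 0).

Lemma prim_deriv p : (prim p)^`() = p.
Proof.
apply/polyP => i; rewrite coef_deriv coef_poly ltnS.
case: leqP => hi.
  by rewrite mul0rn nth_default.
by rewrite scalerMnl -mulr_natr mulVf ?pnatr_eq0 // scale1r.
Qed.

Lemma Phi_surj b : exists p, Phi p = b.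
Proof.
case: hD => _ _ _ /(_ b) [n hn].
elim: n b hn => [|n IH] b hn.
  by exists 0; rewrite Phi0; move: hn => /= ->.
have [p hp] : exists p, Phi p = D b by apply: IH; rewrite -iterSr.
have : D (b - Phi (prim p)) = 0.
  have DN x : D (- x) = - D x.
    by apply/eqP; rewrite -addr_eq0 -DD addrC subrr D0.
  by rewrite DD DN -Phi_deriv prim_deriv hp subrr.
move/hker => [a ha]; exists (prim p + a%:P).
by rewrite PhiD PhiC -ha addrC subrK.
Qed.

Lemma Phi_bij : bijective Phi.
Proof.
have [g hg] := choice Phi_surj.
exists g => // p; apply: Phi_inj; exact: hg.
Qed.


Lemma slice_triv : exists Phi : {poly A} -> B,
     [/\ bijective Phi, Phi 1 = 1,
         (forall p q, Phi (p + q) = Phi p + Phi q) /\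
         (forall p q, Phi (p * q) = Phi p * Phi q),
         (forall a, Phi a%:P = iota a) &
         (forall p, Phi (p^`()) = D (Phi p))].
Proof.
exists Phi; split.
- exact: Phi_bij.
- exact: Phi1.
- by split; [exact: PhiD | exact: PhiM].
- exact: PhiC.
- exact: Phi_deriv.
Qed.

End Slice.

Section PointLemmas.
Variable A : comAlgType CC.
Variable phi : A -> CC.
Hypothesis hp : is_point phi.

Lemma pt0 : phi 0 = 0.
Proof. by case: hp => _ hA _ _; apply: (addrI (phi 0)); rewrite -hA !addr0. Qed.
Lemma ptD x y : phi (x + y) = phi x + phi y. Proof. by case: hp. Qed.
Lemma ptM x y : phi (x * y) = phi x * phi y. Proof. by case: hp. Qed.
Lemma ptZ c x : phi (c *: x) = c * phi x. Proof. by case: hp. Qed.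
Lemma pt1 : phi 1 = 1. Proof. by case: hp. Qed.
Lemma ptX x n : phi (x ^+ n) = phi x ^+ n.
Proof. elim: n => [|n IH]; by rewrite ?expr0 ?pt1 // !exprS ptM IH. Qed.
Lemma ptS (I : Type) (r : seq I) (F : I -> A) :
  phi (\sum_(i <- r) F i) = \sum_(i <- r) phi (F i).
Proof.
elim: r => [|i r IH]; first by rewrite !big_nil pt0.
by rewrite !big_cons ptD IH.
Qed.
End PointLemmas.

Unset Implicit Arguments.
Theorem mainTheorem12
  (A B : comAlgType CC) (iota : A -> B) (D : B -> B) (xi : A -> CC)
  (hS : normal_affine_surface_algebra A)
  (hB : normal_affine_algebra B)
  (hiota : is_alg_hom iota) (hiota_inj : injective iota)
  (hD : is_LND D)
  (hker : forall b : B, D b = 0 <-> exists a : A, b = iota a)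
  (hxi : is_point xi) (hxreg : regular_point xi)
  (hbundle : forall eta : A -> CC, is_point eta -> (exists a, eta a != xi a) ->
     exists f : A, [/\ xi f = 0, eta f != 0 &
        exists (s : B) (n : nat), D s = iota (f ^+ n)])
  (hnontriv : ~ exists Phi : {poly A} -> B,
     [/\ bijective Phi, Phi 1 = 1,
         (forall p q, Phi (p + q) = Phi p + Phi q) /\
         (forall p q, Phi (p * q) = Phi p * Phi q),
         (forall a, Phi a%:P = iota a) &
         (forall p, Phi (p^`()) = D (Phi p))])
  (hgr : grD_generated_in_degree1 D iota) :
  forall phi : B -> CC, is_point phi -> (forall a, phi (iota a) = xi a) ->
    Ga_fixed_point D phi.
Proof.
move=> phi hphi hphixi.
have io0 : iota 0 = 0.
  by case: hiota => _ hA _ _; apply: (addrI (iota 0)); rewrite -hA !addr0.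
have io1 : iota 1 = 1 by case: hiota.
have ioD : forall x y, iota (x + y) = iota x + iota y by case: hiota.
have ioM : forall x y, iota (x * y) = iota x * iota y by case: hiota.
have D0 : D 0 = 0.
  by case: hD => hA _ _ _; apply: (addrI (D 0)); rewrite -hA !addr0.
have DD : forall x y, D (x + y) = D x + D y by case: hD.
have DM : forall x y, D (x * y) = x * D y + D x * y by case: hD.
have Dio a : D (iota a) = 0 by apply/hker; exists a.
pose I (a : A) := exists y, D y = iota a.
have hI : is_ideal I.
  split.
  - by exists 0; rewrite D0 io0.
  - by move=> x y [u hu] [v hv]; exists (u + v); rewrite DD hu hv ioD.
  - by move=> a x [u hu]; exists (iota a * u); rewrite DM hu Dio mul0r addr0 ioM.
have hIx : forall a, I a -> xi a = 0.
  move=> a0 Ia0; apply: contrapT => /eqP xa0.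
  have I1 : I 1.
    apply: contrapT => nI1.
    have [eta [heta etaI]] := nss hS.1.1 hI nI1.
    have [|f [_ etaf [s [n hsn]]]] := hbundle eta heta.
      by exists a0; rewrite (etaI _ Ia0) eq_sym.
    have : I (f ^+ n) by exists s.
    move/etaI; rewrite (ptX heta) => /eqP; rewrite expf_eq0 (negbTE etaf) andbF //.
  case: I1 => s hs; rewrite io1 in hs.
  apply: hnontriv; exact: (slice_triv hiota hiota_inj hD hker hs).
have Z : forall nu b, iter nu.+1 D b = 0 -> phi (D b) = 0.
  elim=> [|nu IH] b hb.
    by rewrite /= in hb; rewrite hb (pt0 hphi).
  have [n [a [y [hy hr]]]] := hgr nu.+1 b hb.
  set S := \sum_(i < n) iota (a i) * \prod_(j < nu.+1) y i j in hr.
  have ZZ : forall x, phi (D x) = 0 -> forall z, phi (D z) = 0 -> phi (D (x * z)) = 0.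
    by move=> x hx z hz; rewrite DM (ptD hphi) !(ptM hphi) hx hz mulr0 mul0r addr0.
  have ZS : phi (D S) = 0.
    rewrite /S; apply: (big_ind (fun x => phi (D x) = 0)).
    - by rewrite D0 (pt0 hphi).
    - by move=> x z hx hz; rewrite DD (ptD hphi) hx hz addr0.
    move=> i _ /=; apply: (ZZ (iota (a i))); first by rewrite Dio (pt0 hphi).
    apply: (big_ind (fun x => phi (D x) = 0)).
    - by rewrite -io1 Dio (pt0 hphi).
    - by move=> x z hx hz; apply: (ZZ x hx z hz).
    move=> j _ /=; have := hy i j; rewrite /= => /hker [a' ha'].
    by rewrite ha' hphixi; apply: hIx; exists (y i j).
  have hbS : phi (D (b - S)) = 0 by exact: IH _ hr.
  have -> : b = S + (b - S) by rewrite addrC subrK.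
  by rewrite DD (ptD hphi) ZS hbS addr0.
have ZD : forall b, phi (D b) = 0.
  move=> b; case: hD => _ _ _ /(_ b) [[|nu] hn].
    by rewrite /= in hn; rewrite hn D0 (pt0 hphi).
  exact: Z hn.
move=> t b [|N] hN.
  by rewrite /expD big_ord0; rewrite /= in hN; rewrite hN.
rewrite /expD big_ord_recl (ptD hphi) (ptS hphi) big1 ?addr0.
  by rewrite (ptZ hphi) expr0 fact0 invr1 mul1r mul1r.
by move=> i _; rewrite (ptZ hphi) /= ZD mulr0.
Qed.
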